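(* Let $v\in\Sigma^*$, let $u$ be a $v$-minimal word, $i\in\mathrm{supp}(u)$, and $r_i=\mathrm{Rnk}(\mathcal{I}_i)$. Then there is a word $w_i\in\Sigma^*$ with $|w_i|\le n_iD(2,r_i,n)$ such that $\theta_i(w_i)=\sum_{j=1}^m h_jt_j$ for some $m$, some elements $h_j\in\mathbb{M}_{n_i}(\mathbb{C})$ and some $t_j\in\mathcal{I}_i$ with $t_j\sim_i 0_i$ for all $j\in[1,m]$.
   Context: Let $\mathcal{A}=\langle Q,\Sigma,\delta\rangle$ be a synchronizing automaton with $n=|Q|$ states $q_1,\dots,q_n$; write $q\cdot u$ for the action of $u\in\Sigma^*$ (extended to subsets) and $\mathrm{rk}(u)=|Q\cdot u|$. Each word acts linearly on $\mathbb{C}Q$ by $q\mapsto q\cdot u$, preserving $w^\perp=\{x:\langle x,q_1+\dots+q_n\rangle=0\}$; let $\rho:\Sigma^*\to\mathbb{M}_{n-1}(\mathbb{C})$ be the induced representation and $\mathcal{R}$ the $\mathbb{C}$-algebra generated by $\rho(\Sigma^* )$. Write $\mathcal{R}/\mathrm{Rad}(\mathcal{R})\cong\prod_{i=1}^k\mathbb{M}_{n_i}(\mathbb{C})$ (Jacobson radical, Wedderburn–Artin) and let $\theta_i:\Sigma^*\to\mathbb{M}_{n_i}(\mathbb{C})$ be $\rho$ followed by the quotient map and the $i$-th projection; $0_i$ is the zero matrix. The monoid $\theta_i(\Sigma^* )$ has a unique $0$-minimal ideal $\mathcal{I}_i$; $\mathrm{Rnk}(\mathcal{I}_i)=\min\{\mathrm{rk}(x):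 \theta_i(x)\in\mathcal{I}_i\setminus\{0_i\}\}$. The support of a word $z$ is $\mathrm{supp}(z)=\{i:\theta_i(z)\neq0_i\}$. For $v\in\Sigma^*$, a word $u\in\Sigma^*v\Sigma^*$ is $v$-minimal if $\mathrm{supp}(u)\neq\emptyset$ and there is no $z\in\Sigma^*v\Sigma^*$ with $\emptyset\neq\mathrm{supp}(z)\subsetneq\mathrm{supp}(u)$. For such $u$, $i\in\mathrm{supp}(u)$ and $g\in\mathcal{I}_i$, a word $w$ $u$-represents $g$ if $w\in\Sigma^*u\Sigma^*$, $\theta_i(w)=g$, and either $g=0_i$ or $\mathrm{rk}(w)$ is minimum among all words $w'\in\Sigma^*u\Sigma^*$ with $\theta_i(w')=g$. Define $\sigma_i$ on $\mathcal{I}_i$ by $g\,\sigma_i\,f$ iff $g=f$ or there exist words $w_1,w_2$ that $u$-represent $g$ and $f$ respectively with $|Q\cdot w_1\cap Q\cdot w_2|>1$; let $\sim_i$ be the transitive closure of $\sigma_i$. $D(2,r,n)$ denotes the maximum size of a family of $r$-element subsets of $[1,n]$ in which every $2$-element subset is contained in at most one member. *)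

(* Defs.v *)
From mathcomp Require Import all_boot all_order all_algebra.
From mathcomp Require Import reals complex.
From Stdlib Require Import Relations.

Set Implicit Arguments.
Unset Strict Implicit.
Unset Printing Implicit Defensive.

Import GRing.Theory.
Local Open Scope ring_scope.

Section Automaton.

(* The last state ord_max plays the role of q_n
   of the paper; rho is taken w.r.t. the basis (q_j - q_last), j < n, of w^perp. *)
Variables (Sigma : finType) (n : nat) (delta : 'I_n.+1 -> Sigma -> 'I_n.+1).

Definition act (q : 'I_n.+1) (u : seq Sigma) : 'I_n.+1 := foldl delta q u.

Definition image (u : seq Sigma) : {set 'I_n.+1} := [set act q u | q : 'I_n.+1].

Definition rk (u : seq Sigma) : nat := #|image u|.

Definition synchronizing : Prop := exists u : seq Sigma, rk u = 1%N.

Definition in_ideal_word (v u : seq Sigma) : Prop :=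
  exists x y : seq Sigma, u = x ++ v ++ y.

Variable C : fieldType.

Definition widenQ (j : 'I_n) : 'I_n.+1 := widen_ord (leqnSn n) j.

(* Matrix (acting on row vectors) of the action of u on w^perp, in the basis
   e_j = q_j - q_last (j < n):  e_i . u = q_{i.u} - q_{last.u}. *)
Definition rho (u : seq Sigma) : 'M[C]_n :=
  \matrix_(i, j) ((act (widenQ i) u == widenQ j)%:R - (act ord_max u == widenQ j)%:R).

Inductive in_alg : 'M[C]_n -> Prop :=
| in_alg_gen u : in_alg (rho u)
| in_alg_0 : in_alg 0
| in_alg_add A B : in_alg A -> in_alg B -> in_alg (A + B)
| in_alg_scale (c : C) A : in_alg A -> in_alg (c *: A)
| in_alg_mul A B : in_alg A -> in_alg B -> in_alg (A *m B).

(* Jacobson radical of the (unital, identity = rho [::] = 1) algebra: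
   x such that 1 - y x is left invertible in the algebra for every y. *)
Definition in_rad (A : 'M[C]_n) : Prop :=
  in_alg A /\
  forall B, in_alg B -> exists Z, in_alg Z /\ Z *m (1%:M - B *m A) = 1%:M.

(* Wedderburn--Artin data: pi i is (quotient by Rad followed by the i-th
   projection of an isomorphism R/Rad(R) ~= prod_i M_{nn i}(C)), i.e.
   the family (pi i)_i restricted to R is a unital algebra morphism
   R -> prod_i M_{nn i}(C) which is surjective with kernel Rad(R). *)
Definition wedderburn_data (k : nat) (nn : 'I_k -> nat)
  (pi : forall i : 'I_k, 'M[C]_n -> 'M[C]_(nn i)) : Prop :=
  [/\ (forall i, (0 < nn i)%N),
      ((forall i A B, in_alg A -> in_alg B ->
         pi i (A + B) = pi i A + pi i B /\ pi i (A *m B) = pi i A *m pi i B) /\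
       (forall i (c : C) A, in_alg A -> pi i (c *: A) = c *: pi i A)),
      (forall i, pi i 1%:M = 1%:M),
      (forall g : forall i, 'M[C]_(nn i),
         exists A, in_alg A /\ forall i, pi i A = g i)
    & (forall A, in_alg A -> ((forall i, pi i A = 0) <-> in_rad A))].

Section Theta.
Variables (k : nat) (nn : 'I_k -> nat) (pi : forall i : 'I_k, 'M[C]_n -> 'M[C]_(nn i)).

Definition theta (i : 'I_k) (u : seq Sigma) : 'M[C]_(nn i) := pi i (rho u).

Definition in_monoid (i : 'I_k) (g : 'M[C]_(nn i)) : Prop := exists x, theta i x = g.

Definition is_monoid_ideal (i : 'I_k) (J : 'M[C]_(nn i) -> Prop) : Prop :=
  [/\ (forall g, J g -> @in_monoid i g),
      (exists g, J g)
    & (forall a g b, @in_monoid i a -> J g -> @in_monoid i b -> J (a *m g *m b))].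

Definition zero_minimal_ideal (i : 'I_k) (I : 'M[C]_(nn i) -> Prop) : Prop :=
  [/\ @is_monoid_ideal i I,
      (exists g, I g /\ g <> 0)
    & (forall J, @is_monoid_ideal i J -> (forall g, J g -> I g) ->
         (forall g, J g -> g = 0) \/ (forall g, I g -> J g))].

Definition is_Rnk (i : 'I_k) (I : 'M[C]_(nn i) -> Prop) (r : nat) : Prop :=
  (exists x, [/\ I (theta i x), theta i x <> 0 & rk x = r]) /\
  (forall x, I (theta i x) -> theta i x <> 0 -> (r <= rk x)%N).

Definition supp (z : seq Sigma) : {set 'I_k} := [set i | theta i z != 0].

Definition v_minimal (v u : seq Sigma) : Prop :=
  [/\ in_ideal_word v u, supp u != set0
    & ~ (exists z, [/\ in_ideal_word v z, supp z != set0 & supp z \proper supp u])].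

Definition u_represents (u : seq Sigma) (i : 'I_k) (I : 'M[C]_(nn i) -> Prop)
  (g : 'M[C]_(nn i)) (w : seq Sigma) : Prop :=
  [/\ I g, in_ideal_word u w, theta i w = g
    & g = 0 \/ (forall w', in_ideal_word u w' -> theta i w' = g -> (rk w <= rk w')%N)].

Definition sigma_rel (u : seq Sigma) (i : 'I_k) (I : 'M[C]_(nn i) -> Prop)
  (g f : 'M[C]_(nn i)) : Prop :=
  [/\ I g, I f &
      g = f \/ exists w1 w2, [/\ u_represents u I g w1, u_represents u I f w2
                              & (1 < #|image w1 :&: image w2|)%N]].

Definition sim_rel (u : seq Sigma) (i : 'I_k) (I : 'M[C]_(nn i) -> Prop) :
  relation 'M[C]_(nn i) := clos_trans _ (sigma_rel u I).

End Theta.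
End Automaton.

Definition D2 (r N : nat) : nat :=
  \max_(F : {set {set 'I_N}} |
          [forall A in F, #|A| == r] &&
          [forall P : {set 'I_N}, (#|P| == 2%N) ==> (#|[set A in F | P \subset A]| <= 1)%N])
    #|F|.

(* Main.v *)
Require Import Defs.
From mathcomp Require Import all_boot all_order all_algebra.
From mathcomp Require Import reals complex zify.
From Stdlib Require Import Relations Classical ClassicalEpsilon.

Set Implicit Arguments.
Unset Strict Implicit.
Unset Printing Implicit Defensive.
Import GRing.Theory.
Local Open Scope ring_scope.

Section Basic.
Variables (Sigma : finType) (n : nat) (delta : 'I_n.+1 -> Sigma -> 'I_n.+1).
Variable C : fieldType.

Lemma act_cat q a b : act delta q (a ++ b) = act delta (act delta q a) b.
Proof. by rewrite /act foldl_cat. Qed.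

Lemma image_cat a b :
  Defs.image delta (a ++ b) = [set act delta q b | q in Defs.image delta a].
Proof.
rewrite /Defs.image -imset_comp; apply: eq_imset => q /=; exact: act_cat.
Qed.

Lemma rk_catl a b : (rk delta (a ++ b) <= rk delta a)%N.
Proof. by rewrite /rk image_cat leq_imset_card. Qed.

Lemma rk_catr a b : (rk delta (a ++ b) <= rk delta b)%N.
Proof.
rewrite /rk; apply: subset_leq_card; apply/subsetP => x /imsetP [q _ ->].
by rewrite act_cat; apply/imsetP; exists (act delta q a).
Qed.

Lemma sum_widen (q : 'I_n.+1) (F : 'I_n.+1 -> C) : F ord_max = 0 ->
  \sum_(k < n) (q == widenQ k)%:R * F (widenQ k) = F q.
Proof.
move=> F0.
have [->|qn] := eqVneq q ord_max.
  rewrite big1 ?F0 // => k _.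
  suff -> : (ord_max == widenQ k) = false by rewrite mul0r.
  apply/negbTE; apply/eqP => /(congr1 val) /= e.
  by move: (ltn_ord k); rewrite -e ltnn.
have qlt : (q < n)%N.
  have := ltn_ord q; rewrite ltnS leq_eqVlt => /orP [/eqP e|//].
  by case/eqP: qn; apply: val_inj.
rewrite (bigD1 (Ordinal qlt)) //= big1 ?addr0.
  have -> : widenQ (Ordinal qlt) = q by apply: val_inj.
  by rewrite eqxx mul1r.
move=> k kq; suff -> : (q == widenQ k) = false by rewrite mul0r.
apply/negbTE; apply: contra kq => /eqP e; apply/eqP/val_inj => /=.
by rewrite e.
Qed.

Lemma rho_cat a b : rho delta C (a ++ b) = rho delta C a *m rho delta C b.
Proof.
apply/matrixP => i j; rewrite !mxE.
set F := fun q : 'I_n.+1 =>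
  ((act delta q b == widenQ j)%:R - (act delta ord_max b == widenQ j)%:R : C).
have F0 : F ord_max = 0 by rewrite /F subrr.
have E : forall q, \sum_(k < n) (q == widenQ k)%:R * rho delta C b k j = F q.
  move=> q; rewrite -(sum_widen q F0); apply: eq_bigr => k _; by rewrite mxE.
under eq_bigr => k _ do rewrite mxE mulrBl.
rewrite sumrB !E /F !act_cat.
rewrite opprB addrA subrK. done.
Qed.

Lemma rho_nil : rho delta C [::] = 1%:M.
Proof.
apply/matrixP => i j; rewrite !mxE /act /=.
have -> : (ord_max == widenQ j) = false.
  apply/negbTE; apply/eqP => /(congr1 val) /= e.
  by move: (ltn_ord j); rewrite -e ltnn.
have -> : (widenQ i == widenQ j) = (i == j).
  by apply/eqP/eqP => [/(congr1 val) e|->] //; apply: val_inj.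
by rewrite subr0.
Qed.

Lemma rho_rk1 w : (rk delta w <= 1)%N -> rho delta C w = 0.
Proof.
move=> /card_le1_eqP H; apply/matrixP => i j; rewrite !mxE.
have := H (act delta (widenQ i) w) (act delta ord_max w).
rewrite !(imset_f (fun q => act delta q w)) // => /(_ isT isT) ->.
by rewrite subrr.
Qed.

End Basic.

Section Main.
Variables (R : realType) (Sigma : finType) (n : nat)
  (delta : 'I_n.+1 -> Sigma -> 'I_n.+1)
  (k : nat) (nn : 'I_k -> nat)
  (pi : forall l : 'I_k, 'M[R[i]]_n -> 'M[R[i]]_(nn l))
  (u : seq Sigma) (l : 'I_k) (I : 'M[R[i]]_(nn l) -> Prop) (r : nat).
Hypotheses (Hsync : synchronizing delta) (Hw : wedderburn_data delta pi)
  (Hl : l \in supp delta pi u) (HI : zero_minimal_ideal delta pi I)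
  (Hr : is_Rnk delta pi I r).

Local Notation th := (theta delta pi l).
Local Notation CC := (R[i]).
Local Notation M := 'M[R[i]]_(nn l).

Lemma pi_add A B : Defs.in_alg delta A -> Defs.in_alg delta B -> pi l (A + B) = pi l A + pi l B.
Proof. by case: Hw => _ [H _] _ _ _ hA hB; case: (H l A B hA hB). Qed.

Lemma pi_mul A B : Defs.in_alg delta A -> Defs.in_alg delta B -> pi l (A *m B) = pi l A *m pi l B.
Proof. by case: Hw => _ [H _] _ _ _ hA hB; case: (H l A B hA hB). Qed.

Lemma pi_scale c A : Defs.in_alg delta A -> pi l (c *: A) = c *: pi l A.
Proof. by case: Hw => _ [_ H] _ _ _ hA; apply: H. Qed.

Lemma pi0 : pi l 0 = 0.
Proof.
have := pi_add (in_alg_0 delta CC) (in_alg_0 delta CC).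
rewrite addr0 => h; apply: (@addrI _ (pi l 0)); by rewrite addr0 -h.
Qed.

Lemma th_cat a b : th (a ++ b) = th a *m th b.
Proof. by rewrite /theta rho_cat pi_mul //; constructor. Qed.

Lemma th_nil : th [::] = 1%:M.
Proof. by rewrite /theta rho_nil; case: Hw. Qed.

Lemma th_rk1 w : (rk delta w <= 1)%N -> th w = 0.
Proof. by move=> h; rewrite /theta rho_rk1 // pi0. Qed.

Lemma th_reset : exists z, th z = 0.
Proof. by case: Hsync => z hz; exists z; apply: th_rk1; rewrite hz. Qed.

Definition spanth (X : M) :=
  exists s : seq (CC * seq Sigma), X = \sum_(p <- s) p.1 *: th p.2.

Lemma spanth_alg A0 : Defs.in_alg delta A0 -> spanth (pi l A0).
Proof.
elim => [w||A B hA [s1 e1] hB [s2 e2]|c A hA [s e]|A B hA [s1 e1] hB [s2 e2]].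
- by exists [:: (1, w)]; rewrite big_cons big_nil addr0 scale1r.
- by exists [::]; rewrite big_nil pi0.
- by exists (s1 ++ s2); rewrite big_cat -e1 -e2 pi_add.
- exists [seq (c * p.1, p.2) | p <- s]; rewrite big_map pi_scale // e scaler_sumr.
  by apply: eq_bigr => p _; rewrite scalerA.
- exists [seq (p.1 * q.1, p.2 ++ q.2) | p <- s1, q <- s2].
  rewrite big_allpairs_dep pi_mul // e1 e2 mulmx_suml; apply: eq_bigr => p _.
  rewrite mulmx_sumr; apply: eq_bigr => q _ /=.
  by rewrite th_cat -scalemxAl -scalemxAr scalerA.
Qed.

Lemma spanth_all (X : M) : spanth X.
Proof.
case: Hw => _ _ _ Hs _.
pose g := fun j : 'I_k => match l =P j with
  | ReflectT e => ecast j 'M[CC]_(nn j) e X | ReflectF _ => 0 end.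
have [A [hA hg]] := Hs g.
have -> : X = pi l A.
  rewrite hg /g; case: eqP => // e; by rewrite (eq_irrelevance e erefl).
exact: spanth_alg.
Qed.

Lemma prime_th (X Y : M) : X != 0 -> Y != 0 -> exists z, X *m th z *m Y != 0.
Proof.
move=> /eqP X0 /eqP Y0; apply: NNPP => H.
have H' : forall z, X *m th z *m Y = 0.
  move=> z; apply: NNPP => h; apply: H; exists z; exact/eqP.
have HZ : forall Z, X *m Z *m Y = 0.
  move=> Z; have [s ->] := spanth_all Z.
  rewrite mulmx_sumr mulmx_suml big1 // => p _.
  by rewrite -scalemxAr -scalemxAl H' scaler0.
have [a [b Xab]] : exists a b, X a b != 0.
  apply: NNPP => h; apply: X0; apply/matrixP => a b; rewrite mxE.
  apply/eqP; apply: NNPP => h'; apply: h; exists a, b; exact/negP.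
have [c [e Yce]] : exists a b, Y a b != 0.
  apply: NNPP => h; apply: Y0; apply/matrixP => a' b'; rewrite mxE.
  apply/eqP; apply: NNPP => h'; apply: h; exists a', b'; exact/negP.
have := congr1 (fun Z : M => Z a e) (HZ (delta_mx b c)).
rewrite mxE (bigD1 c) //= big1 ?addr0.
  rewrite mxE (bigD1 b) //= big1 ?addr0.
    rewrite mxE !eqxx mulr1 mxE => /eqP; rewrite mulf_eq0 (negbTE Xab) (negbTE Yce) //.
  by move=> j hj; rewrite mxE (negbTE hj) mulr0.
move=> j hj; rewrite mxE big1 ?mul0r // => j' _; rewrite mxE.
by rewrite (negbTE hj) andbF mulr0.
Qed.


Lemma I_mul g a b : I g -> I (th a *m g *m th b).
Proof.
case: HI => [[_ _ H] _ _] Ig; apply: H => //; [exists a | exists b]; done.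
Qed.

Lemma I_r g y : I g -> I (g *m th y).
Proof. by move=> Ig; have := I_mul [::] y Ig; rewrite th_nil mul1mx. Qed.

Lemma thu0 : th u != 0.
Proof. by move: Hl; rewrite inE. Qed.

Lemma rep_exists f : I f -> f <> 0 ->
  exists w, in_ideal_word u w /\ th w = f /\ (rk delta w <= r)%N.
Proof.
move=> If f0.
case: Hr => [[x [Ix x0 rx]] _].
have x0' : th x != 0 by apply/eqP.
have [z hz] := prime_th thu0 x0'.
pose x0w := u ++ z ++ x.
have thx0 : th x0w = th u *m th z *m th x by rewrite /x0w !th_cat mulmxA.
have rkx0 : (rk delta x0w <= r)%N.
  by rewrite -rx; apply: leq_trans (rk_catr _ _ _) _; apply: rk_catr.
pose J := fun g : M => exists a b, g = th a *m th x0w *m th b.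
have JI : forall g, J g -> I g.
  move=> g [a [b ->]]; apply: I_mul.
  have := I_mul (u ++ z) [::] Ix; by rewrite th_nil mulmx1 -th_cat -catA.
have Jid : is_monoid_ideal delta pi J.
  split.
  - move=> g [a [b ->]]; exists (a ++ x0w ++ b); by rewrite !th_cat mulmxA.
  - by exists (th [::] *m th x0w *m th [::]); exists [::], [::].
  - move=> a' g b' [x1 <-] [a [b ->]] [x2 <-].
    exists (x1 ++ a), (b ++ x2); by rewrite !th_cat !mulmxA.
case: HI => _ _ Hmin.
case: (Hmin J Jid JI) => [H0|HIJ].
  exfalso; move: hz; rewrite -thx0.
  by have -> := H0 (th x0w) (ex_intro _ [::] (ex_intro _ [::] _)); rewrite ?th_nil ?mul1mx ?mulmx1 ?eqxx.
have [a [b ef]] := HIJ f If.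
exists (a ++ x0w ++ b); split; last split.
- by exists a, (z ++ x ++ b); rewrite /x0w -!catA.
- by rewrite ef !th_cat mulmxA.
- apply: leq_trans (rk_catr _ _ _) _; apply: leq_trans (rk_catl _ _ _) _; exact: rkx0.
Qed.

Lemma r_ge2 : (1 < r)%N.
Proof.
case: Hr => [[x [_ x0 rx]] _]; rewrite ltnNge; apply/negP => h.
by apply: x0; apply: th_rk1; rewrite rx.
Qed.

Lemma rk_ge w : I (th w) -> th w <> 0 -> (r <= rk delta w)%N.
Proof. by case: Hr => _ H; apply: H. Qed.

Lemma rep_rk g w : u_represents delta pi u I g w -> g <> 0 -> (rk delta w <= r)%N.
Proof.
case=> Ig _ _ [//|Hm] g0.
have [w' [iw' [tw' rw']]] := rep_exists Ig g0.
exact: leq_trans (Hm w' iw' tw') rw'.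
Qed.

Lemma rep_cat g w y : u_represents delta pi u I g w ->
  u_represents delta pi u I (g *m th y) (w ++ y).
Proof.
move=> hw; have := hw; case=> Ig [x1 [y1 ew]] tw _.
split.
- exact: I_r.
- by exists x1, (y1 ++ y); rewrite ew -!catA.
- by rewrite th_cat tw.
case: (classic (g *m th y = 0)) => [->|gy0]; [by left|right].
have g0 : g <> 0 by move=> e; apply: gy0; rewrite e mul0mx.
move=> w' _ tw'.
apply: leq_trans (rk_catl _ _ _) _; apply: leq_trans (rep_rk hw g0) _.
apply: rk_ge; rewrite tw' //; exact: I_r.
Qed.

Lemma rep_inj g w y : u_represents delta pi u I g w -> g *m th y <> 0 ->
  {in Defs.image delta w &, injective (fun q => act delta q y)}.
Proof.
move=> hw gy0; have g0 : g <> 0 by move=> e; apply: gy0; rewrite e mul0mx.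
have h1 := rep_rk hw g0.
have [_ _ tw _] := hw.
have h2 : (r <= rk delta (w ++ y))%N.
  by apply: rk_ge; rewrite th_cat tw //; apply: I_r; case: hw.
apply/imset_injP; rewrite eqn_leq leq_imset_card /=.
by move: h2; rewrite /rk image_cat => h2; apply: leq_trans h1 h2.
Qed.

Lemma sigma_compat g f y : sigma_rel delta pi u I g f ->
  sigma_rel delta pi u I (g *m th y) (f *m th y).
Proof.
case=> Ig If H; split; try exact: I_r.
case: H => [->|[w1 [w2 [h1 h2 hc]]]]; [by left|].
case: (classic (g *m th y = f *m th y)) => [->|ne]; [by left|right].
exists (w1 ++ y), (w2 ++ y); split; try exact: rep_cat.
have [p [q [hp hq pq]]] := card_gt1P hc.
move: hp hq; rewrite !inE => /andP [p1 p2] /andP [q1 q2].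
have apq : act delta p y != act delta q y.
  case: (classic (g *m th y = 0)) => gy0.
    have fy0 : f *m th y <> 0 by move=> e; apply: ne; rewrite gy0 e.
    by apply: contra pq => /eqP e; apply/eqP; apply: (rep_inj h2 fy0).
  by apply: contra pq => /eqP e; apply/eqP; apply: (rep_inj h1 gy0).
apply/card_gt1P; exists (act delta p y), (act delta q y).
by rewrite !inE !image_cat !(imset_f (fun q => act delta q y)).
Qed.

Lemma sim_compat g f y : sim_rel delta pi u I g f ->
  sim_rel delta pi u I (g *m th y) (f *m th y).
Proof.
elim=> [a b h|a b c _ h1 _ h2].
  by apply: t_step; apply: sigma_compat.
exact: t_trans h1 h2.
Qed.


Section Case2.
Hypothesis H0 : forall t, I t -> sim_rel delta pi u I t 0 -> t = 0.

Lemma count_bound g y : I g -> g <> 0 -> g *m th y = 0 ->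
  (forall y', (size y' < size y)%N -> g *m th y' <> 0) ->
  (size y <= D2 r n.+1)%N.
Proof.
move=> Ig g0 gy Hmin.
pose m := size y.
have gj : forall j : 'I_m, I (g *m th (take j y)) /\ g *m th (take j y) <> 0.
  move=> j; split; first exact: I_r.
  apply: Hmin; have := ltn_ord j; rewrite /m => hj; by rewrite size_take hj.
have HW : forall j : 'I_m, exists w, u_represents delta pi u I (g *m th (take j y)) w.
  move=> j; have [Ij j0] := gj j.
  have [w [iw [tw rw]]] := rep_exists Ij j0.
  exists w; split => //; right => w' _ tw'.
  apply: leq_trans rw _; apply: rk_ge; rewrite tw' //.
pose W := fun j : 'I_m => proj1_sig (constructive_indefinite_description _ (HW j)).
have WP : forall j : 'I_m, u_represents delta pi u I (g *m th (take j y)) (W j).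
  move=> j; exact: (proj2_sig (constructive_indefinite_description _ (HW j))).
have Wrk : forall j : 'I_m, rk delta (W j) = r.
  move=> j; apply/eqP; rewrite eqn_leq (rep_rk (WP j) (proj2 (gj j))) /=.
  have [_ _ tw _] := WP j; apply: rk_ge; rewrite tw; [exact: (proj1 (gj j))|exact: (proj2 (gj j))].
have key : forall j j' : 'I_m, j != j' ->
    (#|Defs.image delta (W j) :&: Defs.image delta (W j')| <= 1)%N.
  move=> j j'.
  wlog lt : j j' / (j < j')%N.
    move=> Hw' jj'; case: (ltngtP j j') => [h|h|h].
    - exact: Hw'.
    - by rewrite setIC; apply: Hw' => //; rewrite eq_sym.
    - by move: jj' => /eqP; case; apply: val_inj.
  move=> _; rewrite leqNgt; apply/negP => hc.
  have s1 : sigma_rel delta pi u I (g *m th (take j y)) (g *m th (take j' y)).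
    split; [exact: (proj1 (gj j))|exact: (proj1 (gj j'))|right].
    by exists (W j), (W j'); split => //; apply: WP.
  have := sim_compat (drop j' y) (t_step _ _ _ _ s1).
  rewrite -!mulmxA -!th_cat cat_take_drop gy => hs.
  have e := H0 (I_r (take j y ++ drop j' y) Ig) hs.
  apply: (Hmin (take j y ++ drop j' y)); last by [].
  rewrite size_cat size_take size_drop (ltn_ord j).
  have := ltn_ord j'; rewrite -/m => hj'.
  lia.
pose F := [set Defs.image delta (W j) | j : 'I_m].
have Finj : injective (fun j => Defs.image delta (W j)).
  move=> j j' e; apply/eqP; apply: contraT => ne.
  have := key j j' ne; rewrite -e setIid.
  by have := Wrk j; rewrite /rk => ->; rewrite leqNgt r_ge2.
have cF : #|F| = m by rewrite card_imset // card_ord.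
rewrite -/m -cF /D2.
apply: (leq_bigmax_cond (F := fun F0 : {set {set 'I_n.+1}} => #|F0|)).
apply/andP; split.
  apply/forall_inP => A /imsetP [j _ ->]; by have := Wrk j; rewrite /rk => ->.
apply/forallP => P; apply/implyP => /eqP P2.
apply/card_le1_eqP => A B; rewrite !inE => /andP [/imsetP [j _ ->] PA] /andP [/imsetP [j' _ ->] PB].
case: (eqVneq j' j) => [->//|ne].
have := key j' j ne; rewrite leqNgt; move/negP; case.
rewrite -P2; apply: subset_leq_card; by rewrite subsetI PA PB.
Qed.


Lemma short_kill g : I g -> g <> 0 ->
  exists y, (size y <= D2 r n.+1)%N /\ g *m th y = 0.
Proof.
move=> Ig g0.
have [z0 hz0] := th_reset.
suff H : forall N y, (size y <= N)%N -> g *m th y = 0 ->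
    exists y, (size y <= D2 r n.+1)%N /\ g *m th y = 0.
  by apply: (H _ z0 (leqnn _)); rewrite hz0 mulmx0.
elim=> [|N IH] y sy gy.
  by exists y; split => //; move: sy; rewrite leqn0 => /eqP ->.
case: (classic (exists y', (size y' < size y)%N /\ g *m th y' = 0)).
  case=> y' [s' g']; apply: (IH y') => //; rewrite -ltnS; exact: leq_trans s' sy.
move=> Hn; exists y; split => //; apply: (count_bound Ig g0 gy) => y' s' g'.
by apply: Hn; exists y'.
Qed.

Lemma step w : th w <> 0 -> exists y, (size y <= D2 r n.+1)%N /\
  (\rank (th (w ++ y)) < \rank (th w))%N.
Proof.
move=> w0.
case: HI => _ [h [Ih h0]] _.
have h0' : h != 0 by apply/eqP.
have w0' : th w != 0 by apply/eqP.
have [z hz] := prime_th h0' w0'.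
pose g := h *m th z *m th w.
have Ig : I g by rewrite /g -mulmxA -th_cat; apply: I_r.
have [y [sy gy]] := short_kill Ig (fun e => (negP hz) (introT eqP e)).
exists y; split => //.
rewrite th_cat; have := mxrank_mul_ker (th w) (th y).
move=> E; rewrite -E -[X in (X < _)%N]addn0 ltn_add2l lt0n mxrank_eq0.
apply: contra hz => /eqP H.
have : (g <= th w :&: kermx (th y))%MS.
  rewrite sub_capmx; apply/andP; split; first by rewrite /g submxMl.
  by rewrite sub_kermx; apply/eqP.
by rewrite H submx0.
Qed.

Lemma iter j : exists w, (size w <= j * D2 r n.+1)%N /\ (\rank (th w) <= nn l - j)%N.
Proof.
elim: j => [|j [w [sw rw]]].
  by exists [::]; rewrite mul0n subn0 rank_leq_col.
case: (classic (th w = 0)) => [w0|w0].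
  exists w; split; first by apply: leq_trans sw _; rewrite leq_mul2r leqnSn orbT.
  by rewrite w0 mxrank0.
have [y [sy ry]] := step w0.
exists (w ++ y); split.
  by rewrite size_cat mulSn addnC leq_add.
lia.
Qed.

Lemma case2 : exists w, (size w <= nn l * D2 r n.+1)%N /\ th w = 0.
Proof.
have [w [sw rw]] := iter (nn l); exists w; split => //.
by apply/eqP; rewrite -mxrank_eq0 -leqn0; move: rw; rewrite subnn.
Qed.
End Case2.


Definition inL (X : M) := exists s : seq (M * M),
  (forall p, p \in s -> I p.2 /\ sim_rel delta pi u I p.2 0) /\
  X = \sum_(p <- s) p.1 *m p.2.

Lemma inL0 : inL 0.
Proof. by exists [::]; rewrite big_nil. Qed.

Lemma inL_add X Y : inL X -> inL Y -> inL (X + Y).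
Proof.
move=> [s1 [h1 ->]] [s2 [h2 ->]]; exists (s1 ++ s2); split; last by rewrite big_cat.
by move=> p; rewrite mem_cat => /orP [/h1|/h2].
Qed.

Lemma inL_base Y t : I t -> sim_rel delta pi u I t 0 -> inL (Y *m t).
Proof.
move=> It st; exists [:: (Y, t)]; split; last by rewrite big_cons big_nil addr0.
by move=> p; rewrite inE => /eqP ->.
Qed.

Lemma nz_entry (X : M) : X <> 0 -> exists a b, X a b != 0.
Proof.
move=> X0; apply: NNPP => h; apply: X0; apply/matrixP => a b; rewrite mxE.
apply/eqP; apply: NNPP => h'; apply: h; exists a, b; exact/negP.
Qed.

Lemma delta_sandwich (t : M) (a b i0 : 'I_(nn l)) :
  delta_mx i0 a *m t *m delta_mx b i0 = t a b *: delta_mx i0 i0.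
Proof.
apply/matrixP => i j; rewrite !mxE (bigD1 b) //= big1 ?addr0.
  rewrite !mxE eqxx /=.
  rewrite (bigD1 a) //= big1 ?addr0.
    rewrite !mxE eqxx andbT.
    by case: (i == i0); case: (j == i0); rewrite /= ?mulr1 ?mulr0 ?mul1r ?mul0r.
  by move=> x hx; rewrite mxE (negbTE hx) andbF mul0r.
by move=> x hx; rewrite !mxE (negbTE hx) /= mulr0.
Qed.

Lemma case1 t : I t -> t <> 0 -> sim_rel delta pi u I t 0 -> inL 1%:M.
Proof.
move=> It t0 st.
have [a [b tab]] := nz_entry t0.
have -> : (1%:M : M) = \sum_(i0 < nn l) (t a b)^-1 *: (delta_mx i0 a *m t *m delta_mx b i0).
  rewrite mx1_sum_delta; apply: eq_bigr => i0 _.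
  by rewrite delta_sandwich scalerA mulVf // scale1r.
apply: (big_ind inL inL0 inL_add) => i0 _.
have [s ->] := spanth_all (delta_mx b i0).
rewrite mulmx_sumr scaler_sumr.
apply: (big_ind inL inL0 inL_add) => p _.
rewrite -scalemxAr scalerA -mulmxA scalemxAl.
apply: inL_base; first exact: I_r.
by have := sim_compat p.2 st; rewrite mul0mx.
Qed.

End Main.

Theorem mainTheorem11 (R : realType) (Sigma : finType) (n : nat)
  (delta : 'I_n.+1 -> Sigma -> 'I_n.+1)
  (k : nat) (nn : 'I_k -> nat)
  (pi : forall l : 'I_k, 'M[R[i]]_n -> 'M[R[i]]_(nn l))
  (v u : seq Sigma) (l : 'I_k) (I : 'M[R[i]]_(nn l) -> Prop) (r : nat) :
  synchronizing delta ->
  wedderburn_data delta pi ->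
  v_minimal delta pi v u ->
  l \in supp delta pi u ->
  zero_minimal_ideal delta pi I ->
  is_Rnk delta pi I r ->
  exists w : seq Sigma,
    (size w <= nn l * D2 r n.+1)%N /\
    exists (m : nat) (h t : 'I_m -> 'M[R[i]]_(nn l)),
      (forall j, I (t j) /\ sim_rel delta pi u I (t j) 0) /\
      theta delta pi l w = \sum_(j < m) h j *m t j.
Proof.
move=> Hs Hw _ Hl HI Hr.
case: (classic (exists t, [/\ I t, t <> 0 & sim_rel delta pi u I t 0])).
  case=> t [It t0 st].
  have [s [hs e]] := case1 Hw Hl HI Hr It t0 st.
  exists [::]; split; first by [].
  exists (size s), (fun j => (nth (0, 0) s j).1), (fun j => (nth (0, 0) s j).2).
  split.
    by move=> j; apply: hs; apply: mem_nth.
  by rewrite th_nil // e (big_nth (0, 0)) big_mkord.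
move=> Hn.
have H0 : forall t, I t -> sim_rel delta pi u I t 0 -> t = 0.
  move=> t It st; apply: NNPP => t0; apply: Hn; by exists t.
have [w [sw tw]] := case2 Hs Hw Hl HI Hr H0.
exists w; split => //.
exists 0%N, (fun _ => 0), (fun _ => 0); split.
  by case.
by rewrite big_ord0.
Qed.
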